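(* Let $\Lambda$ be a positive integer, $r\in[\Lambda-1]$, and $K_\alpha\ge 0$ integers for $\alpha\in[\Lambda-r]$, not all zero. For the MADC model with Generalized Combinatorial MRG (GC-MRG) having $\Lambda$ mapper nodes and $K=\sum_{\alpha\in[\Lambda-r]}K_\alpha\binom{\Lambda}{\alpha}$ reducer nodes, the computation load is $r$ and the communication load $$L(r)=\frac{1}{K}\sum_{\alpha\in[\Lambda-r]}\frac{K_\alpha\binom{\Lambda-r}{\alpha}}{\binom{r+\alpha}{r}-1}$$ is achievable.
   Context: Notation: $[0,n)=\{0,1,\dots,n-1\}$, $[n]=\{1,\dots,n\}$. MADC (multi-access distributed computing) model: There are $\Lambda$ mapper nodes indexed by $[0,\Lambda)$ and $K$ reducer nodes. There are $N$ input files $w_0,\dots,w_{N-1}\in\mathbb{F}_{2^d}$ and $Q$ output functions $\phi_q:\mathbb{F}_{2^d}^N\to\mathbb{F}_{2^b}$, $q\in[0,Q)$, of the form $\phi_q(w_0,\dots,w_{N-1})=h_q(v_{q,0},\dots,v_{q,N-1})$, where $v_{q,n}=g_{q,n}(w_n)\in\mathbb{F}_{2^t}$ is called an intermediate value (IV). Each reducer node $k$ is assigned a set $\mathcal W_k\subseteq[0,Q)$ of $Q/K$ output functions, these sets being pairwise disjoint. The files are partitioned into $F$ disjoint batches of $N/F$ files each. Map phase: each mapper node $\lambda$ stores a set $M_\lambda$ of batches and computes all IVs $v_{q,n}$, $q\in[0,Q)$, for all files $w_n$ in its stored batches. Each reducer node is connected to a set of mapper nodes and has access to every batch stored at any mapper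 node it is connected to, together with all IVs computed from those batches. Shuffle phase: each reducer node $k$ broadcasts to all other reducer nodes, error-free, a message $\mathbf X_k$ of $l_k$ bits that is a function of the IVs it has access to. Reduce phase: each reducer node $k$ must recover all IVs $v_{q,n}$ with $q\in\mathcal W_k$, $n\in[0,N)$, from the received messages and the IVs it has access to. The computation load is $r=\sum_{\lambda}|M_\lambda|/F$ and the communication load is $L=\sum_{k}l_k/(QNt)$. A communication load $L$ is achievable for a given model if there exists a shuffle/reduce scheme satisfying all decoding requirements that attains $L$ (for a suitable choice of the number of files per batch, the number of functions per reducer, and the IV length $t$). GC-MRG (Generalized Combinatorial MRG): the files are split into $F=\binom{\Lambda}{r}$ batches $B_T$, one for each $T\subset[0,\Lambda)$ with $|T|=r$; mapper node $\lambda$ stores exactly the batches $B_T$ with $\lambda\in T$; for each $\alpha\in[\Lambda-r]$ and each $\alpha$-subset $U\subset[0,\Lambda)$ there are exactly $K_\alpha$ reducer nodes connected exactly to the mapper nodes in $U$ (such a reducer has access to $B_T$ iff $T\cap U\neq\emptyset$). (Reducer nodes connected to more than $\Lambda-r$ mapper nodes would access all batches and are not counted.) *)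

(* Defs.v *)
From mathcomp Require Import all_boot all_order all_algebra.
Set Implicit Arguments. Unset Strict Implicit. Unset Printing Implicit Defensive.
Import GRing.Theory Num.Theory.

(* A table of intermediate values v_{q,n} in F_{2^t}, represented as t bits. *)
Definition IV (Q N t : nat) := 'I_Q -> 'I_N -> t.-tuple bool.

Definition mask (Q N t : nat) (acc : pred 'I_N) (v : IV Q N t) : IV Q N t :=
  fun q n => if acc n then v q n else nseq_tuple t false.

Definition access (Lam K N : nat) (B : finType) (M : 'I_Lam -> {set B})
  (conn : 'I_K -> {set 'I_Lam}) (batch : 'I_N -> B) (k : 'I_K) : pred 'I_N :=
  fun n => [exists l, (l \in conn k) && (batch n \in M l)].

Definition comp_load (Lam : nat) (B : finType) (M : 'I_Lam -> {set B}) : rat :=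
  (\sum_(l < Lam) #|M l|)%:R / #|B|%:R.

(* Achievability of communication load L for the MADC model with batch type B
   (F = #|B| batches), mapper storage M and reducer connectivity conn:
   for a suitable number m of files per batch (N = F*m), number s of functions
   per reducer (Q = K*s), IV length t, batch assignment of files, function
   assignment W, message lengths len, encoders X and decoders dec. *)
Definition MADC_achievable (Lam K : nat) (B : finType) (M : 'I_Lam -> {set B})
  (conn : 'I_K -> {set 'I_Lam}) (L : rat) : Prop :=
  exists (m s t : nat) (batch : 'I_(#|B| * m) -> B)
    (W : 'I_K -> {set 'I_(K * s)}) (len : 'I_K -> nat)
    (X : 'I_K -> IV (K * s) (#|B| * m) t -> seq bool)
    (dec : 'I_K -> ('I_K -> seq bool) -> IV (K * s) (#|B| * m) t ->
           'I_(K * s) -> 'I_(#|B| * m) -> t.-tuple bool),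
    [/\ 0 < m, 0 < s & 0 < t] /\
    [/\ forall b : B, #|[set n | batch n == b]| = m,
        forall k, #|W k| = s &
        forall k k', k != k' -> [disjoint W k & W k']] /\
    [/\ forall k (v : IV (K * s) (#|B| * m) t),
          size (X k (mask (access M conn batch k) v)) = len k,
        forall k (v : IV (K * s) (#|B| * m) t) q n, q \in W k ->
          dec k (fun j => if j == k then [::]
                          else X j (mask (access M conn batch j) v))
                (mask (access M conn batch k) v) q n = v q n
      & ((\sum_(k < K) len k)%:R / (K * s * (#|B| * m) * t)%:R = L)%R].

Definition rsub (Lam r : nat) := {T : {set 'I_Lam} | #|T| == r}.

Definition gc_store (Lam r : nat) (l : 'I_Lam) : {set rsub Lam r} :=
  [set T : rsub Lam r | l \in val T].

Definition is_GC_MRG (Lam r : nat) (Kal : nat -> nat) (K : nat)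
  (conn : 'I_K -> {set 'I_Lam}) : Prop :=
  (forall k, 1 <= #|conn k| <= Lam - r) /\
  (forall U : {set 'I_Lam}, 1 <= #|U| <= Lam - r ->
     #|[set k | conn k == U]| = Kal #|U|).

Definition gc_load (Lam r : nat) (Kal : nat -> nat) (K : nat) : rat :=
  ((\sum_(1 <= a < (Lam - r).+1)
      (Kal a * 'C(Lam - r, a))%:R / ('C(r + a, r)%:R - 1)) / K%:R)%R.
Arguments is_GC_MRG : clear implicits.
Arguments gc_store : clear implicits. Arguments gc_load : clear implicits.

(* Main.v *)
Require Import Defs.
From mathcomp Require Import all_boot all_order all_algebra.
From mathcomp Require Import zify ring lra.
Set Implicit Arguments. Unset Strict Implicit. Unset Printing Implicit Defensive.
Import GRing.Theory Num.Theory.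


Definition fq (K : nat) (k : 'I_K) : 'I_(K * 1) := cast_ord (esym (muln1 K)) k.
Definition batchf (Lam r : nat) (n : 'I_(#|{: rsub Lam r}| * 1)) : rsub Lam r :=
  enum_val (cast_ord (muln1 _) n).
Definition fileof (Lam r : nat) (T : rsub Lam r) : 'I_(#|{: rsub Lam r}| * 1) :=
  cast_ord (esym (muln1 _)) (enum_rank T).

Definition dem (Lam r K t : nat) (v : IV (K * 1) (#|{: rsub Lam r}| * 1) t) (u : 'I_K)
  (A : {set 'I_Lam}) : t.-tuple bool :=
  match (insub A : option (rsub Lam r)) with
  | Some T => v (fq u) (fileof T) | None => nseq_tuple t false end.

Definition subsS (Lam : nat) (S : {set 'I_Lam}) (a : nat) : {set {set 'I_Lam}} :=
  [set U : {set 'I_Lam} | (U \subset S) && (#|U| == a)].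
Definition rk (Lam : nat) (S : {set 'I_Lam}) a U := index U (enum (subsS S a)).
Definition fch (Lam : nat) (S : {set 'I_Lam}) a (U U' : {set 'I_Lam}) :=
  if rk S a U' < rk S a U then rk S a U' else (rk S a U').-1.
Definition gch (y b : nat) := if b < y then b else b.+1.

Definition rep (Lam K : nat) (conn : 'I_K -> {set 'I_Lam}) (d : 'I_K) U (i : nat) : 'I_K :=
  nth d (enum [set k | conn k == U]) i.
Definition idx (Lam K : nat) (conn : 'I_K -> {set 'I_Lam}) (k : 'I_K) : nat :=
  index k (enum [set k' | conn k' == conn k]).

Definition cc (Lam r t : nat) (U : {set 'I_Lam}) := t %/ ('C(r + #|U|, r) - 1).

Definition gm (Lam r K t : nat) (conn : 'I_K -> {set 'I_Lam})
   (v : IV (K * 1) (#|{: rsub Lam r}| * 1) t) (k : 'I_K) (S : {set 'I_Lam}) (j : nat) : bool :=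
  \big[addb/false]_(U in subsS S #|conn k| | U != conn k)
     nth false (dem v (rep conn k U (idx conn k)) (S :\: U))
        (fch S #|conn k| U (conn k) * cc r t (conn k) + j).

Definition Sup (Lam r : nat) (U : {set 'I_Lam}) :=
  enum [set S : {set 'I_Lam} | (U \subset S) && (#|S| == #|U| + r)].

Definition Xenc (Lam r K t : nat) (conn : 'I_K -> {set 'I_Lam}) (k : 'I_K)
  (v : IV (K * 1) (#|{: rsub Lam r}| * 1) t) : seq bool :=
  flatten [seq mkseq (gm conn v k Z) (cc r t (conn k)) | Z <- Sup r (conn k)].

Definition lenk (Lam r K t : nat) (conn : 'I_K -> {set 'I_Lam}) (k : 'I_K) :=
  size (Sup r (conn k)) * cc r t (conn k).

Definition decf (Lam r K t : nat) (conn : 'I_K -> {set 'I_Lam}) (k : 'I_K)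
  (msgs : 'I_K -> seq bool) (vk : IV (K * 1) (#|{: rsub Lam r}| * 1) t)
  (q : 'I_(K * 1)) (n : 'I_(#|{: rsub Lam r}| * 1)) : t.-tuple bool :=
  if access (gc_store Lam r) conn (@batchf Lam r) k n then vk q n else
  let U := conn k in let S := U :|: val (batchf n) in let a := #|U| in
  let c := cc r t U in let i := idx conn k in
  mktuple (fun p : 'I_t =>
     let U' := nth set0 (enum (subsS S a)) (gch (rk S a U) (p %/ c)) in
     let k' := rep conn k U' i in
     nth false (msgs k') (index S (Sup r U') * c + p %% c)
     (+) \big[addb/false]_(U'' in subsS S a | (U'' != U') && (U'' != U))
        nth false (dem vk (rep conn k U'' i) (S :\: U'')) (fch S a U'' U' * c + p %% c)).


Definition tt0 (Lam r : nat) := \prod_(1 <= x < (Lam - r).+1) ('C(r + x, r) - 1).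

Lemma bin_ge2 r x : 1 <= r -> 1 <= x -> 1 < 'C(r + x, r).
Proof.
move=> r1 x1; apply: (@leq_trans 'C(r.+1, r)); first by rewrite binSn; lia.
apply: leq_bin2l; lia.
Qed.

Lemma tt0_gt0 Lam r : 1 <= r -> 0 < tt0 Lam r.
Proof.
move=> r1; rewrite /tt0 big_nat_cond; apply: prodn_cond_gt0 => x /andP[/andP[x1 _] _].
have := bin_ge2 r1 x1; lia.
Qed.

Lemma tt0_dvd Lam r a : 1 <= a <= Lam - r -> ('C(r + a, r) - 1) %| tt0 Lam r.
Proof.
move=> Ha; rewrite /tt0 (bigD1_seq a) ?iota_uniq //=; last by rewrite mem_index_iota; lia.
exact: dvdn_mulr.
Qed.

Lemma cc_mul Lam r a (U : {set 'I_Lam}) : #|U| = a -> 1 <= a <= Lam - r ->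
  cc r (tt0 Lam r) U * ('C(r + a, r) - 1) = tt0 Lam r.
Proof. by move=> <- Ha; rewrite /cc divnK // tt0_dvd. Qed.

Lemma card_rsub Lam r : #|{: rsub Lam r}| = 'C(Lam, r).
Proof.
rewrite card_sig -[Lam in RHS]card_ord -card_draws; apply: eq_card => A; by rewrite !inE.
Qed.

Lemma size_flat_mk (A : Type) (h : A -> nat -> bool) c (l : seq A) :
  size (flatten [seq mkseq (h Z) c | Z <- l]) = size l * c.
Proof. by elim: l => //= x l IH; rewrite size_cat size_mkseq IH mulSn. Qed.

Lemma nth_flat_mk (A : Type) (x0 : A) (h : A -> nat -> bool) c (l : seq A) i j :
  i < size l -> j < c ->
  nth false (flatten [seq mkseq (h Z) c | Z <- l]) (i * c + j) = h (nth x0 l i) j.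
Proof.
elim: l i => //= x l IH [|i] Hi Hj.
  by rewrite mul0n add0n nth_cat size_mkseq Hj nth_mkseq.
rewrite nth_cat size_mkseq mulSn -addnA ltnNge leq_addr /= addKn IH //.
Qed.


Lemma comp_ok Lam r : r <= Lam -> comp_load (gc_store Lam r) = (r%:R)%R.
Proof.
move=> rL; rewrite /comp_load.
have -> : \sum_(l < Lam) #|gc_store Lam r l| = #|{: rsub Lam r}| * r.
  transitivity (\sum_(l < Lam) \sum_(T : rsub Lam r) (l \in val T : nat)).
    apply: eq_bigr => l _; rewrite /gc_store -sum1dep_card big_mkcond /=.
    by apply: eq_bigr => T _; case: (l \in val T).
  rewrite exchange_big /= -sum_nat_const; apply: eq_bigr => T _.
  have hT : #|val T| = r by apply/eqP; exact: (valP T).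
  rewrite -[in RHS]hT -sum1_card [RHS]big_mkcond /=; apply: eq_bigr => l _.
  by case: (l \in val T).
have Bpos : (0 < #|{: rsub Lam r}|) by rewrite card_rsub bin_gt0.
rewrite natrM mulrAC mulfV ?mul1r // pnatr_eq0 -lt0n; exact: Bpos.
Qed.


Lemma size_subs Lam (S : {set 'I_Lam}) a : size (enum (subsS S a)) = 'C(#|S|, a).
Proof. by rewrite -cardE cards_draws. Qed.

Lemma size_Sup Lam r (U : {set 'I_Lam}) : size (Sup r U) = 'C(Lam - #|U|, r).
Proof.
rewrite /Sup -cardE.
have -> : [set S : {set 'I_Lam} | (U \subset S) && (#|S| == #|U| + r)] =
   (fun A => A :|: U) @: [set A : {set 'I_Lam} | (A \subset ~: U) & #|A| == r].
  apply/setP => S; rewrite inE; apply/andP/imsetP.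
  - move=> [US /eqP cS]; exists (S :\: U).
      rewrite inE; apply/andP; split; first by apply/subsetP => x; rewrite !inE => /andP[].
      by rewrite cardsD (setIidPr US) cS; apply/eqP; lia.
    apply/setP => x; rewrite !inE; case xU: (x \in U) => /=; last by rewrite orbF.
    exact: (subsetP US x xU).
  - move=> [A]; rewrite inE => /andP[AU /eqP cA] ->; split; first exact: subsetUr.
    rewrite cardsU; move: AU; rewrite -disjoints_subset => /disjoint_setI0 ->.
    by rewrite cards0 subn0 cA addnC.
rewrite card_in_imset; last first.
  move=> A B; rewrite !inE => /andP[AU _] /andP[BU _] E.
  have -> : A = (A :|: U) :\: U.
    by rewrite setDUl setDv setU0; apply/esym/setDidPl; rewrite disjoints_subset.
  rewrite E setDUl setDv setU0; apply/setDidPl; by rewrite disjoints_subset.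
rewrite cards_draws; congr 'C(_, _); have := cardsC U; rewrite card_ord; lia.
Qed.

Lemma count_conn Lam r Kal K (conn : 'I_K -> {set 'I_Lam}) a :
  is_GC_MRG Lam r Kal K conn -> 1 <= a <= Lam - r ->
  #|[set k | #|conn k| == a]| = Kal a * 'C(Lam, a).
Proof.
move=> [_ GC] Ha; rewrite -sum1dep_card.
rewrite (partition_big conn (fun U : {set 'I_Lam} => #|U| == a)) //=.
transitivity (\sum_(U : {set 'I_Lam} | #|U| == a) 1 * Kal a); last first.
  by rewrite -big_distrl /= sum1dep_card card_draws card_ord mulnC.
apply: eq_bigr => U /eqP HU; rewrite mul1n.
rewrite -HU -GC ?HU // -sum1dep_card; apply: eq_bigl => k; rewrite ?inE.
by apply/andP/idP => [[]//|/eqP E]; rewrite E HU eqxx.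
Qed.

Lemma sum_by_val K (f : 'I_K -> nat) lo hi (G : nat -> nat) :
  (forall k, lo <= f k < hi) ->
  \sum_(k < K) G (f k) = \sum_(lo <= a < hi) #|[set k | f k == a]| * G a.
Proof.
move=> Hf.
transitivity (\sum_(lo <= a < hi) \sum_(k < K) ((f k == a) * G a)); last first.
  apply: eq_bigr => a _; rewrite -sum_nat_const [RHS]big_mkcond /=; apply: eq_bigr => k _.
  by rewrite inE; case: (f k == a); rewrite ?mul1n ?mul0n.
rewrite exchange_big /=; apply: eq_bigr => k _.
rewrite (bigD1_seq (f k)) ?iota_uniq //=; last by rewrite mem_index_iota; exact: Hf.
rewrite eqxx mul1n big1 ?addn0 // => a /negbTE; rewrite eq_sym => ->; by rewrite mul0n.
Qed.


Lemma bin_swap n a r : a + r <= n -> 'C(n, a) * 'C(n - a, r) = 'C(n - r, a) * 'C(n, r).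
Proof.
move=> H.
have P : 0 < a`! * r`! * (n - a - r)`! by rewrite !muln_gt0 !fact_gt0.
apply/eqP; rewrite -(eqn_pmul2r P); apply/eqP.
have E1 : 'C(n, a) * 'C(n - a, r) * (a`! * r`! * (n - a - r)`!) =
          ('C(n, a) * (a`! * (n - a)`!)) by rewrite -(bin_fact (_ : r <= n - a)); [ring | lia].
have E2 : 'C(n - r, a) * 'C(n, r) * (a`! * r`! * (n - a - r)`!) =
          ('C(n, r) * (r`! * (n - r)`!)).
  have -> : n - a - r = n - r - a by lia.
  by rewrite -(bin_fact (_ : a <= n - r)); [ring | lia].
by rewrite E1 E2 !bin_fact //; lia.
Qed.

Lemma load_ok Lam r Kal K (conn : 'I_K -> {set 'I_Lam}) :
  1 <= r <= Lam - 1 -> 0 < K ->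
  is_GC_MRG Lam r Kal K conn ->
  ((\sum_(k < K) lenk r (tt0 Lam r) conn k)%:R /
      (K * 1 * (#|{: rsub Lam r}| * 1) * tt0 Lam r)%:R)%R =
     gc_load Lam r Kal K.
Proof.
move=> /andP[r1 rL] Kpos GC.
have GC1 := GC; case: GC1 => Hsz _.
set t := tt0 Lam r.
pose G a := 'C(Lam - a, r) * (t %/ ('C(r + a, r) - 1)).
have -> : \sum_(k < K) lenk r t conn k = \sum_(k < K) G #|conn k|.
  by apply: eq_bigr => k _; rewrite /lenk size_Sup.
rewrite (@sum_by_val K (fun k => #|conn k|) 1 (Lam - r).+1); last first.
  by move=> k; have := Hsz k; lia.
rewrite /gc_load natr_sum !mulr_suml; apply: eq_big_nat => a Ha.
have Ha' : 1 <= a <= Lam - r by lia.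
rewrite (count_conn GC Ha') card_rsub.
have n2 := bin_ge2 r1 (_ : 1 <= a); have {n2} n2 : 1 < 'C(r + a, r) by apply: n2; lia.
set c := t %/ ('C(r + a, r) - 1).
have tE : t = c * ('C(r + a, r) - 1) by rewrite /c divnK // tt0_dvd.
have cpos : 0 < c by move: (tt0_gt0 Lam r1); rewrite -/t tE muln_gt0 => /andP[].
rewrite /G -/c.
have -> : Kal a * 'C(Lam, a) * ('C(Lam - a, r) * c) =
          Kal a * 'C(Lam - r, a) * 'C(Lam, r) * c.
  by rewrite -mulnA (mulnA 'C(Lam, a)) bin_swap; [ring | lia].
rewrite [in X in (_ / X)%R]tE.
have F0 : 0 < 'C(Lam, r) by rewrite bin_gt0; lia.
rewrite !natrM natrB; last by lia.
have hK : ((K%:R : rat) != 0)%R by rewrite pnatr_eq0 -lt0n.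
have hF : (('C(Lam, r)%:R : rat) != 0)%R by rewrite pnatr_eq0 -lt0n.
have hc : ((c%:R : rat) != 0)%R by rewrite pnatr_eq0 -lt0n.
have hn : (('C(r + a, r)%:R - 1 : rat) != 0)%R.
  by rewrite subr_eq0 pnatr_eq1; lia.
field; rewrite ?hK ?hF ?hc ?hn //.
Qed.


Lemma idx_lt Lam r Kal K (conn : 'I_K -> {set 'I_Lam}) k :
  is_GC_MRG Lam r Kal K conn -> idx conn k < Kal #|conn k|.
Proof.
move=> [Hsz Hc]; rewrite /idx -Hc ?Hsz // cardE index_mem mem_enum inE.
exact: eqxx.
Qed.

Lemma rep_conn Lam r Kal K (conn : 'I_K -> {set 'I_Lam}) d (U : {set 'I_Lam}) i :
  is_GC_MRG Lam r Kal K conn -> 1 <= #|U| <= Lam - r -> i < Kal #|U| ->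
  conn (rep conn d U i) = U.
Proof.
move=> [_ Hc] HU Hi; rewrite /rep.
have : nth d (enum [set k | conn k == U]) i \in enum [set k | conn k == U].
  by apply: mem_nth; rewrite -cardE Hc.
by rewrite mem_enum inE => /eqP.
Qed.

Lemma rep_idx Lam r Kal K (conn : 'I_K -> {set 'I_Lam}) d (U : {set 'I_Lam}) i :
  is_GC_MRG Lam r Kal K conn -> 1 <= #|U| <= Lam - r -> i < Kal #|U| ->
  idx conn (rep conn d U i) = i.
Proof.
move=> GC HU Hi; rewrite /idx (rep_conn d GC HU Hi) /rep index_uniq ?enum_uniq //.
by case: GC => _ Hc; rewrite -cardE Hc.
Qed.

Lemma rep_def Lam r Kal K (conn : 'I_K -> {set 'I_Lam}) d d' (U : {set 'I_Lam}) i :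
  is_GC_MRG Lam r Kal K conn -> 1 <= #|U| <= Lam - r -> i < Kal #|U| ->
  rep conn d U i = rep conn d' U i.
Proof.
move=> [_ Hc] HU Hi; rewrite /rep; apply: set_nth_default.
by rewrite -cardE Hc.
Qed.

Lemma rep_self Lam K (conn : 'I_K -> {set 'I_Lam}) d k :
  rep conn d (conn k) (idx conn k) = k.
Proof. by rewrite /rep /idx nth_index // mem_enum inE. Qed.

Lemma diff_elem Lam (Sg U U' : {set 'I_Lam}) :
  U \subset Sg -> U' \subset Sg -> #|U| = #|U'| -> U != U' ->
  exists l, (l \in U') && (l \in Sg :\: U).
Proof.
move=> USg U'Sg cE neq.
case: (boolP (U' \subset U)) => [sub|/subsetPn [l lU' lU]].
  by move: neq; rewrite eq_sym eqEcard sub cE leqnn.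
by exists l; rewrite lU' !inE lU (subsetP U'Sg).
Qed.

Lemma dem_mask Lam r K t (conn : 'I_K -> {set 'I_Lam}) k' (v : IV (K * 1) (#|{: rsub Lam r}| * 1) t) u (A : {set 'I_Lam}) :
  (exists l, (l \in conn k') && (l \in A)) ->
  dem (Defs.mask (access (gc_store Lam r) conn (@batchf Lam r) k') v) u A = dem v u A.
Proof.
move=> [l Hl]; rewrite /dem; case: insubP => // T _ vT.
rewrite /Defs.mask; case: ifP => // /negbT /negP; case; apply/existsP; exists l.
have -> : batchf (fileof T) = T.
  rewrite /batchf /fileof.
  have -> : cast_ord (muln1 #|{: rsub Lam r}|) (cast_ord (esym (muln1 #|{: rsub Lam r}|)) (enum_rank T)) = enum_rank T by apply: val_inj.
  exact: enum_rankK.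
by rewrite /gc_store inE vT.
Qed.

Lemma Xenc_nth Lam r K t (conn : 'I_K -> {set 'I_Lam}) k' (w : IV (K * 1) (#|{: rsub Lam r}| * 1) t) Sg j :
  Sg \in Sup r (conn k') -> j < cc r t (conn k') ->
  nth false (Xenc conn k' w) (index Sg (Sup r (conn k')) * cc r t (conn k') + j) =
  gm conn w k' Sg j.
Proof.
move=> HS Hj; rewrite /Xenc (nth_flat_mk Sg) ?index_mem ?nth_index //.
Qed.


Lemma decode_ok Lam r Kal K (conn : 'I_K -> {set 'I_Lam}) :
  1 <= r <= Lam - 1 -> is_GC_MRG Lam r Kal K conn ->
     forall (k : 'I_K) (v : IV (K * 1) (#|{: rsub Lam r}| * 1) (tt0 Lam r))
       (q : 'I_(K * 1)) (n : 'I_(#|{: rsub Lam r}| * 1)),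
     q \in [set fq k] ->
     decf conn k
       (fun j : 'I_K =>
        if j == k
        then [::]
        else
         Xenc conn j
           (Defs.mask (access (gc_store Lam r) conn (@batchf Lam r) j) v))
       (Defs.mask (access (gc_store Lam r) conn (@batchf Lam r) k) v) q n =
     v q n.
Proof.
move=> /andP[r1 rL] GC k v q n; rewrite inE => /eqP ->.
have GC' := GC; case: GC' => Hsz Hcnt.
rewrite /decf; case: ifP => [acc|nacc]; first by rewrite /Defs.mask acc.
set t := tt0 Lam r.
set U := conn k; set T := val (batchf n); set Sg := U :|: T; set a := #|U|.
have Ha : 1 <= a <= Lam - r by exact: Hsz.
have cT : #|T| = r by apply/eqP; exact: (valP (batchf n)).
have dUT : [disjoint U & T].
  apply/pred0P => l /=; apply/negbTE/negP => /andP[lU lT].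
  move/negbT/negP: nacc; apply; apply/existsP; exists l.
  by rewrite lU /gc_store inE.
have cS : #|Sg| = a + r by rewrite /Sg cardsU (disjoint_setI0 dUT) cards0 subn0 cT.
have SUT : Sg :\: U = T.
  rewrite /Sg setDUl setDv set0U; apply/setDidPl; by rewrite disjoint_sym.
have USg : U \subset Sg by exact: subsetUl.
set E := enum (subsS Sg a).
have sE : size E = 'C(r + a, r).
  rewrite /E size_subs cS.
  have -> : 'C(a + r, a) = 'C(r + a, r + a - r) by congr 'C(_, _); lia.
  by rewrite bin_sub // leq_addr.
have n2 : 1 < 'C(r + a, r) by apply: bin_ge2; lia.
set c := cc r t U.
have tE : c * ('C(r + a, r) - 1) = t by exact: cc_mul.
have cpos : 0 < c.
  by move: (tt0_gt0 Lam r1); rewrite -/t -tE muln_gt0 => /andP[].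
have UE : U \in E by rewrite /E mem_enum inE USg eqxx.
have uE : uniq E by exact: enum_uniq.
apply: eq_from_tnth => p; rewrite tnth_mktuple.
set b := p %/ c; set j := p %% c.
have hb : b < 'C(r + a, r) - 1 by rewrite /b ltn_divLR // mulnC tE.
have hj : j < c by rewrite /j ltn_pmod.
set y := rk Sg a U.
have hy : y < size E by rewrite /y /rk index_mem.
set g := gch y b.
have hg : g < size E by rewrite /g /gch sE; case: ifP; lia.
set U' := nth set0 E g.
have U'E : U' \in E by exact: mem_nth.
have rkU' : rk Sg a U' = g by rewrite /rk index_uniq.
have U'U : U' != U.
  apply/negP => /eqP E'; move: rkU'; rewrite E' -/y /g /gch; case: ifP; lia.
have fUU' : fch Sg a U U' = b.
  rewrite /fch rkU' -/y /g /gch; case h: (b < y) => /=; first by rewrite h.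
  by rewrite ifF //; apply/negbTE; rewrite -leqNgt; move/negbT: h; rewrite -leqNgt; lia.
move: U'E; rewrite mem_enum inE => /andP[U'Sg /eqP cU'].
set i := idx conn k.
have hi : i < Kal a by exact: idx_lt.
have HU' : 1 <= #|U'| <= Lam - r by rewrite cU'.
have hiU' : i < Kal #|U'| by rewrite cU'.
set k' := rep conn k U' i.
have ck' : conn k' = U' by exact: (rep_conn k GC HU' hiU').
have ik' : idx conn k' = i by exact: (rep_idx k GC HU' hiU').
have kk' : (k' == k) = false.
  by apply/negbTE/negP => /eqP E'; move: U'U; rewrite -ck' E' eqxx.
rewrite kk'.
have ccE : cc r t (conn k') = c by rewrite /c /cc ck' cU'.
have SSup : Sg \in Sup r (conn k') by rewrite /Sup mem_enum inE ck' U'Sg cU' cS eqxx.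
have := Xenc_nth (Defs.mask (access (gc_store Lam r) conn (@batchf Lam r) k') v) SSup.
rewrite ccE => H; rewrite -[X in Sup r X]ck' H //.
rewrite /gm ik' -/t ccE ck' cU'.
have HE : forall U0, U0 \in subsS Sg a -> 1 <= #|U0| <= Lam - r /\ i < Kal #|U0|.
  by move=> U0; rewrite inE => /andP[_ /eqP ->].
rewrite (eq_bigr (fun U0 => nth false (dem v (rep conn k U0 i) (Sg :\: U0))
                   (fch Sg a U0 U' * c + j))); last first.
  move=> U0 /andP[U0S nU0]; have [H1 H2] := HE U0 U0S.
  rewrite (rep_def k' k GC H1 H2) dem_mask //.
  move: U0S; rewrite inE => /andP[U0Sg /eqP cU0].
  rewrite ck'; apply: (diff_elem U0Sg U'Sg); by rewrite ?cU0 ?cU'.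
rewrite [X in _ (+) X](eq_bigr (fun U0 => nth false (dem v (rep conn k U0 i) (Sg :\: U0))
                   (fch Sg a U0 U' * c + j))); last first.
  move=> U0 /andP[U0S /andP[_ nU0]]; rewrite dem_mask //.
  move: U0S; rewrite inE => /andP[U0Sg /eqP cU0].
  apply: (diff_elem U0Sg USg); by rewrite ?cU0.
rewrite (bigD1 U) /=; last by rewrite (inE) USg eqxx eq_sym U'U.
set R1 := \big[addb/false]_(i0 | _) _.
set R2 := \big[addb/false]_(i0 | _) _.
have -> : R1 = R2.
  rewrite /R1 /R2; apply: eq_bigl => U0; rewrite andbA; done.
rewrite addbK fUU' rep_self SUT -/j -divn_eq /dem /T valK (tnth_nth false).
by rewrite /fileof /batchf; congr (nth _ (v _ _) _); apply: val_inj; rewrite /= enum_valK.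
Qed.


Lemma batchfK Lam r (n : 'I_(#|{: rsub Lam r}| * 1)) : fileof (batchf n) = n.
Proof. by apply: val_inj; rewrite /= enum_valK. Qed.
Lemma fileofK Lam r (T : rsub Lam r) : batchf (fileof T) = T.
Proof.
rewrite /batchf /fileof.
have -> : cast_ord (muln1 #|{: rsub Lam r}|) (cast_ord (esym (muln1 #|{: rsub Lam r}|)) (enum_rank T)) = enum_rank T by apply: val_inj.
exact: enum_rankK.
Qed.



Theorem theorem5 (Lam r : nat) (Kal : nat -> nat) (K : nat)
  (conn : 'I_K -> {set 'I_Lam}) :
  0 < Lam -> 1 <= r <= Lam - 1 ->
  (exists a, 1 <= a <= Lam - r /\ 0 < Kal a) ->
  K = \sum_(1 <= a < (Lam - r).+1) Kal a * 'C(Lam, a) ->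
  is_GC_MRG Lam r Kal K conn ->
  comp_load (gc_store Lam r) = (r%:R)%R /\
  MADC_achievable (gc_store Lam r) conn (gc_load Lam r Kal K).
Proof.
move=> Lpos Hr exK Kdef GC.
have /andP[r1 rL] := Hr.
split; first by apply: comp_ok; lia.
have Kpos : 0 < K.
  case: exK => a [Ha Ka]; rewrite Kdef (bigD1_seq a) ?iota_uniq //=; last by rewrite mem_index_iota; lia.
  rewrite addn_gt0 muln_gt0 Ka bin_gt0; apply/orP; left; lia.
exists 1, 1, (tt0 Lam r), (@batchf Lam r), (fun k => [set fq k]), (lenk r (tt0 Lam r) conn),
  (@Xenc Lam r K (tt0 Lam r) conn), (@decf Lam r K (tt0 Lam r) conn).
split; [|split].
- by split => //; apply: tt0_gt0.
- split.
  + move=> b; rewrite -[RHS](cards1 (fileof b)); apply: eq_card => n; rewrite !inE.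
    apply/eqP/eqP => [<-|->]; [by rewrite batchfK | exact: fileofK].
  + by move=> k; rewrite cards1.
  + move=> k k' kk; rewrite disjoints1 inE; apply: contra kk => /eqP E.
    by apply/eqP/val_inj; move: (congr1 val E).
- split.
  + by move=> k v; rewrite /Xenc size_flat_mk.
  + exact: (decode_ok Hr GC).
  + exact: load_ok.
Qed.
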